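(* Let $m\ge 1$ and let $\{S_n\}$ be a $\bmod m$ random walk on $\mathbb{Z}$ with parameters $\mathbf{p}=(p_0,\dots,p_{m-1})$, $\mathbf{q}=(q_0,\dots,q_{m-1})$ satisfying $p_iq_i\neq 0$ for $i=0,1,\dots,m-1$. Let $p^\ast_m$ be the probability that the walk started at $S_0=0$ reaches $m$ before it reaches $-m$. Then \[ p^\ast_m=\frac{p_0p_1\cdots p_{m-1}}{p_0p_1\cdots p_{m-1}+q_0q_1\cdots q_{m-1}}=\frac{\rho_m}{1+\rho_m},\qquad \rho_m:=\frac{p_0p_1\cdots p_{m-1}}{q_0q_1\cdots q_{m-1}} . \]
   Context: A random walk on $\mathbb{Z}$ here is a time-homogeneous Markov chain $\{S_n\}$ on $\mathbb{Z}$ with $S_{n+1}-S_n\in\{-1,0,1\}$ a.s., with $p_j=P(S_{n+1}-S_n=1\mid S_n=j)$, $q_j=P(S_{n+1}-S_n=-1\mid S_n=j)$, $r_j=1-p_j-q_j$. It is a $\bmod m$ random walk (denoted $G(m,\mathbf{p},\mathbf{q})$) if $p_j=p_{j+m}$, $q_j=q_{j+m}$ for all $j\in\mathbb{Z}$. The quantity $p^\ast_m$ is the constant up-step probability of the embedded simple random walk of $\{S_n\}$ on the lattice $m\mathbb{Z}$. *)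

(* Defs.v *)
From HB Require Import structures.
From mathcomp Require Import all_boot all_order all_algebra.
From mathcomp Require Import all_classical all_reals all_analysis.
Set Implicit Arguments. Unset Strict Implicit. Unset Printing Implicit Defensive.
Import Order.TTheory GRing.Theory Num.Theory.
Local Open Scope ring_scope.

Definition step (i : 'I_3) : int := (i%:Z - 1)%R.

Definition walk_pos (n : nat) (s : {ffun 'I_n -> 'I_3}) (k : nat) : int :=
  \sum_(l < n | (l < k)%N) step (s l).

(* Transition probability of the mod m walk: at state x, with
   j = x mod m in {0..m-1}, go up with p j, down with q j, stay with
   r j = 1 - p j - q j. *)
Definition trans (R : comNzRingType) (m : nat) (p q : nat -> R) (x : int) (i : 'I_3) : R :=
  let j := absz (x %% m%:Z)%Z in
  if val i == 0%N then q j else if val i == 1%N then 1 - p j - q j else p j.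

Definition path_weight (R : comNzRingType) (m : nat) (p q : nat -> R) (n : nat)
  (s : {ffun 'I_n -> 'I_3}) : R :=
  \prod_(k < n) @trans R m p q (walk_pos s k) (s k).

Definition first_hit_up (m n : nat) (s : {ffun 'I_n -> 'I_3}) : bool :=
  [forall k : 'I_n, `|walk_pos s k| < m%:Z] && (walk_pos s n == m%:Z).

Definition hit_up_at (R : comNzRingType) (m : nat) (p q : nat -> R) (n : nat) : R :=
  \sum_(s : {ffun 'I_n -> 'I_3} | @first_hit_up m n s) @path_weight R m p q n s.

(* Main.v *)
Set Warnings "-all".
Require Import Defs.
From HB Require Import structures.
From mathcomp Require Import all_boot all_order all_algebra.
From mathcomp Require Import all_classical all_reals all_analysis.
From mathcomp Require Import zify ring lra.
Import Order.TTheory GRing.Theory Num.Theory.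
Local Open Scope ring_scope.
Local Open Scope classical_set_scope.
Set Implicit Arguments. Unset Strict Implicit.

Definition inside (m n : nat) (s : {ffun 'I_n -> 'I_3}) : bool :=
  [forall k : 'I_n, `|walk_pos s k| < m%:Z].

Definition En (R : realType) (m : nat) (p q : nat -> R) (n : nat) (g : int -> R) : R :=
  \sum_(s : {ffun 'I_n -> 'I_3}) (inside m s)%:R * path_weight m p q s * g (walk_pos s n).

Definition Lop (R : realType) (m : nat) (p q : nat -> R) (g : int -> R) (x : int) : R :=
  if `|x| < m%:Z then \sum_(i : 'I_3) trans m p q x i * g (x + step i) else 0.

Definition ext n (s : {ffun 'I_n -> 'I_3}) (a : 'I_3) : {ffun 'I_n.+1 -> 'I_3} :=
  [ffun k : 'I_n.+1 => if unlift ord_max k is Some k' then s k' else a].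

Lemma widen_lift n (k : 'I_n) : widen_ord (leqnSn n) k = lift ord_max k.
Proof. by apply: val_inj; rewrite /= /bump leqNgt ltn_ord. Qed.

Lemma ext_widen n (s : {ffun 'I_n -> 'I_3}) a (k : 'I_n) :
  ext s a (widen_ord (leqnSn n) k) = s k.
Proof. by rewrite ffunE widen_lift liftK. Qed.

Lemma ext_max n (s : {ffun 'I_n -> 'I_3}) a : ext s a ord_max = a.
Proof. by rewrite ffunE unlift_none. Qed.

Lemma walk_pos_ext_le n (s : {ffun 'I_n -> 'I_3}) a (k : nat) :
  (k <= n)%N -> walk_pos (ext s a) k = walk_pos s k.
Proof.
move=> kn; rewrite /walk_pos big_mkcond big_ord_recr /= [in RHS]big_mkcond.
rewrite ltnNge kn /= addr0; apply: eq_bigr => i _ /=.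
by rewrite ext_widen.
Qed.

Lemma walk_pos_ext_last n (s : {ffun 'I_n -> 'I_3}) a :
  walk_pos (ext s a) n.+1 = walk_pos s n + step a.
Proof.
rewrite /walk_pos big_mkcond big_ord_recr /= [in RHS]big_mkcond ltnSn ext_max.
congr (_ + _); apply: eq_bigr => i _ /=.
by rewrite ext_widen ltn_ord ltnS ltnW.
Qed.

Lemma inside_ext m n (s : {ffun 'I_n -> 'I_3}) a :
  inside m (ext s a) = inside m s && (`|walk_pos s n| < m%:Z).
Proof.
apply/forallP/andP.
  move=> H; split.
    apply/forallP => k; have := H (widen_ord (leqnSn n) k).
    by rewrite /= walk_pos_ext_le // ltnW.
  by have := H ord_max; rewrite /= walk_pos_ext_le.
move=> [/forallP H1 H2] k.
have kn : (k <= n)%N by rewrite -ltnS.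
rewrite walk_pos_ext_le //.
case: (ltnP k n) => hk; first by exact: (H1 (Ordinal hk)).
by have -> : (k : nat) = n by apply/eqP; rewrite eqn_leq kn hk.
Qed.

Lemma weight_ext (R : realType) m (p q : nat -> R) n (s : {ffun 'I_n -> 'I_3}) a :
  path_weight m p q (ext s a) = path_weight m p q s * trans m p q (walk_pos s n) a.
Proof.
rewrite /path_weight big_ord_recr /= ext_max walk_pos_ext_le //.
congr (_ * _); apply: eq_bigr => i _.
by rewrite ext_widen walk_pos_ext_le // ltnW.
Qed.

Lemma En_S (R : realType) m (p q : nat -> R) n g :
  En m p q n.+1 g = En m p q n (Lop m p q g).
Proof.
rewrite /En (reindex (fun sa : {ffun 'I_n -> 'I_3} * 'I_3 => ext sa.1 sa.2)) /=; last first.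
  apply: onW_bij.
  exists (fun s' : {ffun 'I_n.+1 -> 'I_3} =>
            ([ffun k : 'I_n => s' (widen_ord (leqnSn n) k)], s' ord_max)).
    move=> [s a] /=; congr (_, _); last by rewrite ext_max.
    by apply/ffunP => k; rewrite ffunE ext_widen.
  move=> s' /=; apply/ffunP => k; rewrite ffunE.
  case: unliftP => [j ->|->] //.
  by rewrite ffunE widen_lift.
rewrite -(pair_big xpredT xpredT (fun s a => (inside m (ext s a))%:R * path_weight m p q (ext s a) * g (walk_pos (ext s a) n.+1))) /=.
apply: eq_bigr => s _.
under eq_bigr => a _ do rewrite inside_ext weight_ext walk_pos_ext_last.
rewrite /Lop; case: (inside m s) => /=.
  case: ifP => h /=.
    rewrite mul1r mulr_sumr; apply: eq_bigr => a _.
    by rewrite mul1r !mulrA.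
  by rewrite mulr0 big1 // => a _; rewrite !mul0r.
by rewrite !mul0r big1 // => a _; rewrite !mul0r.
Qed.

Definition okpq (R : realType) (m : nat) (p q : nat -> R) : Prop :=
  (0 < m)%N /\ forall i, (i < m)%N -> 0 <= p i /\ 0 <= q i /\ p i + q i <= 1.

Lemma idx_lt (m : nat) (x : int) : (0 < m)%N -> (absz (x %% m%:Z)%Z < m)%N.
Proof.
move=> m0.
have h1 : (0 <= (x %% m%:Z)%Z) by apply: modz_ge0; rewrite eqz_nat -lt0n.
have h2 : ((x %% m%:Z)%Z < m%:Z) by apply: ltz_pmod; rewrite ltz_nat.
lia.
Qed.

Lemma trans_ge0 (R : realType) m (p q : nat -> R) x i :
  okpq m p q -> 0 <= trans m p q x i.
Proof.
move=> [m0 H]; have [h1 [h2 h3]] := H _ (idx_lt x m0).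
rewrite /trans; case: ifP => _; first by [].
case: ifP => _; last by [].
by rewrite subr_ge0 lerBrDr addrC.
Qed.

Lemma trans_sum (R : realType) m (p q : nat -> R) x :
  \sum_(i < 3) trans m p q x i = 1.
Proof.
rewrite !big_ord_recr big_ord0 /= /trans /=.
ring.
Qed.

Lemma weight_ge0 (R : realType) m (p q : nat -> R) n (s : {ffun 'I_n -> 'I_3}) :
  okpq m p q -> 0 <= path_weight m p q s.
Proof. by move=> ok; apply: prodr_ge0 => k _; apply: trans_ge0. Qed.

Lemma En_0 (R : realType) m (p q : nat -> R) g : En m p q 0 g = g 0.
Proof.
pose s0 : {ffun 'I_0 -> 'I_3} := [ffun k => ord0].
rewrite /En (big_pred1 s0); last first.
  by move=> s /=; symmetry; apply/eqP/ffunP => -[].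
rewrite /inside /path_weight /walk_pos big_ord0 big1; last by move=> [].
have -> : [forall k : 'I_0, `|\sum_(l < 0 | (l < k)%N) step (s0 l)| < m%:Z] = true.
  by apply/forallP => -[].
by rewrite !mul1r.
Qed.

Lemma En_le (R : realType) m (p q : nat -> R) n (g1 g2 : int -> R) :
  okpq m p q -> (forall x, g1 x <= g2 x) -> En m p q n g1 <= En m p q n g2.
Proof.
move=> ok H; apply: ler_sum => s _; apply: ler_wpM2l => //.
by apply: mulr_ge0; [apply: ler0n | apply: weight_ge0].
Qed.

Lemma En_add (R : realType) m (p q : nat -> R) n (g1 g2 : int -> R) :
  En m p q n (fun x => g1 x + g2 x) = En m p q n g1 + En m p q n g2.
Proof. by rewrite /En -big_split; apply: eq_bigr => s _; rewrite mulrDr. Qed.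

Lemma En_scale (R : realType) m (p q : nat -> R) n c (g : int -> R) :
  En m p q n (fun x => c * g x) = c * En m p q n g.
Proof.
by rewrite /En mulr_sumr; apply: eq_bigr => s _; rewrite mulrCA.
Qed.

Lemma En_ext (R : realType) m (p q : nat -> R) n (g1 g2 : int -> R) :
  (forall x, g1 x = g2 x) -> En m p q n g1 = En m p q n g2.
Proof. by move=> H; apply: eq_bigr => s _; rewrite H. Qed.

Lemma En_iter (R : realType) m (p q : nat -> R) n k g :
  En m p q (n + k) g = En m p q n (iter k (Lop m p q) g).
Proof.
elim: k g => [|k IH] g; first by rewrite addn0.
by rewrite addnS En_S IH iterSr.
Qed.

Lemma hit_En (R : realType) m (p q : nat -> R) n :
  hit_up_at m p q n = En m p q n (fun x => (x == m%:Z)%:R).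
Proof.
rewrite /hit_up_at /En big_mkcond; apply: eq_bigr => s _.
rewrite /first_hit_up /inside.
case: [forall _, _] => /=; last by rewrite !mul0r.
by case: (_ == _); rewrite ?mul1r ?mulr1 ?mulr0.
Qed.

Definition ind (R : realType) (m : nat) (x : int) : R := ((`|x| < m%:Z)%R)%:R.

Lemma ind01 (R : realType) m x : 0 <= ind R m x <= 1.
Proof. by rewrite /ind; case: (_ < _); rewrite /= ?lexx ?ler01. Qed.

Lemma Lop_bound (R : realType) m (p q : nat -> R) (g : int -> R) :
  okpq m p q -> (forall y, 0 <= g y <= 1) ->
  forall x, 0 <= Lop m p q g x <= ind R m x.
Proof.
move=> ok Hg x; rewrite /Lop /ind; case: ifP => h /=; last by rewrite lexx.
apply/andP; split.
  apply: sumr_ge0 => i _; apply: mulr_ge0; first exact: trans_ge0.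
  by case/andP: (Hg (x + step i)).
rewrite -(trans_sum m p q x); apply: ler_sum => i _.
apply: ler_piMr; first exact: trans_ge0.
by case/andP: (Hg (x + step i)).
Qed.

Lemma iter_bound (R : realType) m (p q : nat -> R) j :
  okpq m p q -> forall x, 0 <= iter j (Lop m p q) (ind R m) x <= ind R m x.
Proof.
move=> ok; elim: j => [|j IH] x /=; first by rewrite lexx andbT; case/andP: (ind01 R m x).
apply: Lop_bound => // y; have /andP[a b] := IH y.
by rewrite a /= (le_trans b) //; case/andP: (ind01 R m y).
Qed.

Lemma P_le (R : realType) m (p q : nat -> R) j :
  okpq m p q -> (j < m)%N -> \prod_(i < m) p i <= p j.
Proof.
move=> [m0 H] hj; rewrite (bigD1 (Ordinal hj)) //=.
apply: ler_piMr; first by have [] := H j hj.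
apply: prodr_ile1 => i _; have [a [b c]] := H i (ltn_ord i).
by rewrite a /= (le_trans _ c) // lerDl.
Qed.

Lemma P_ge0 (R : realType) m (p q : nat -> R) :
  okpq m p q -> 0 <= \prod_(i < m) p i.
Proof. by move=> [m0 H]; apply: prodr_ge0 => i _; have [] := H i (ltn_ord i). Qed.

Lemma decay (R : realType) m (p q : nat -> R) j :
  okpq m p q -> forall x, `|x| < m%:Z -> m%:Z - x <= j%:Z ->
  iter j (Lop m p q) (ind R m) x <= 1 - (\prod_(i < m) p i) ^+ j.
Proof.
move=> ok; set P := \prod_(i < m) p i.
have P0 := P_ge0 ok.
elim: j => [|j IH] x hx hj; first by exfalso; lia.
have [m0 H] := ok.
have jx := idx_lt x m0.
have [pj0 [qj0 pqj]] := H _ jx.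
have Pp := P_le ok jx.
have PJ0 : 0 <= P ^+ j by apply: exprn_ge0.
have PJ1 : P ^+ j <= 1 by apply: exprn_ile1 => //; apply: (le_trans Pp); rewrite (le_trans _ pqj) // lerDl.
rewrite iterS {1}/Lop hx !big_ord_recr big_ord0 /= add0r /trans /=.
set a := absz _.
set v1 := iter j _ _ (x + step _).
set v2 := iter j _ _ (x + step _).
set v3 := iter j _ _ (x + step _).
have b1 : 0 <= v1 <= 1 by have /andP[u w] := iter_bound j ok (x + step ord0); rewrite u (le_trans w) //; case/andP: (ind01 R m (x + step ord0)).
have b2 : 0 <= v2 <= 1.
  by have /andP[u w] := iter_bound j ok (x + step (lift ord0 ord0)); rewrite u (le_trans w) //; case/andP: (ind01 R m (x + step (lift ord0 ord0))).
have e3 : x + step ord_max = x + 1 by rewrite /step /=.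
have b3 : v3 <= 1 - P ^+ j \/ v3 <= 0.
  rewrite /v3 e3.
  case: (boolP (`|x + 1| < m%:Z)) => h1.
    left; apply: IH => //; lia.
  right; have /andP[_ w] := iter_bound j ok (x + 1).
  by move: w; rewrite /ind (negbTE h1).
case/andP: b1 => b1 b1'; case/andP: b2 => b2 b2'.
have t1 : q a * v1 <= q a by apply: ler_piMr.
have t2 : (1 - p a - q a) * v2 <= 1 - p a - q a by apply: ler_piMr => //; lra.
have t4 : P * P ^+ j <= p a * P ^+ j by apply: ler_wpM2r.
have t5 : P * P ^+ j <= P by apply: ler_piMr.
rewrite exprS.
case: b3 => b3.
  have t3 : p a * v3 <= p a * (1 - P ^+ j) by apply: ler_wpM2l.
  nra.
have t3 : p a * v3 <= 0 by rewrite mulr_ge0_le0.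
nra.
Qed.

Definition Tn (R : realType) m (p q : nat -> R) n := En m p q n (ind R m).

Lemma En_zero (R : realType) m (p q : nat -> R) n : En m p q n (fun _ => 0) = 0.
Proof.
by rewrite (En_ext _ _ _ _ (g2 := fun x => 0 * 0)) ?En_scale ?mul0r // => x; rewrite mul0r.
Qed.

Lemma T_ge0 (R : realType) m (p q : nat -> R) n : okpq m p q -> 0 <= Tn m p q n.
Proof.
move=> ok; rewrite -(En_zero m p q n); apply: En_le => // x.
Qed.

Lemma T_mono (R : realType) m (p q : nat -> R) n : okpq m p q ->
  Tn m p q n.+1 <= Tn m p q n.
Proof.
move=> ok; rewrite /Tn En_S; apply: En_le => // x.
have /andP[_ h] := Lop_bound ok (fun y => ind01 R m y) x.
exact: h.
Qed.

Lemma T_anti (R : realType) m (p q : nat -> R) n d : okpq m p q ->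
  Tn m p q (n + d) <= Tn m p q n.
Proof.
move=> ok; elim: d => [|d IH]; first by rewrite addn0.
by rewrite addnS (le_trans (T_mono _ ok)).
Qed.

Lemma iterK_le (R : realType) m (p q : nat -> R) : okpq m p q ->
  forall x, iter (2 * m) (Lop m p q) (ind R m) x <=
    (1 - (\prod_(i < m) p i) ^+ (2 * m)) * ind R m x.
Proof.
move=> ok x; case: (boolP (`|x| < m%:Z)) => h.
  rewrite /ind h mulr1; apply: decay => //; lia.
have /andP[_ w] := iter_bound (2 * m) ok x.
by move: w; rewrite /ind (negbTE h) /= mulr0.
Qed.

Lemma T_geom (R : realType) m (p q : nat -> R) k : okpq m p q ->
  Tn m p q (k * (2 * m)) <= (1 - (\prod_(i < m) p i) ^+ (2 * m)) ^+ k.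
Proof.
move=> ok; set c := 1 - _.
have c0 : 0 <= c.
  have [m0 H] := ok.
  rewrite /c subr_ge0 exprn_ile1 // ?(P_ge0 ok) //.
  apply: (le_trans (P_le ok m0)).
  by have [a [b e]] := H 0%N m0; rewrite (le_trans _ e) // lerDl.
elim: k => [|k IH].
  rewrite mul0n /Tn En_0 /ind expr0; case: (_ < _) => //=.
rewrite mulSn addnC /Tn En_iter.
apply: (le_trans (En_le _ ok (iterK_le ok))).
rewrite En_scale exprS; apply: ler_wpM2l => //.
Qed.

Lemma T_small (R : realType) m (p q : nat -> R) e : okpq m p q ->
  (forall i, (i < m)%N -> 0 < p i) -> 0 < e ->
  exists N, forall n, (N <= n)%N -> Tn m p q n < e.
Proof.
move=> ok pos e0; set c := 1 - (\prod_(i < m) p i) ^+ (2 * m).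
have Ppos : 0 < \prod_(i < m) p i by apply: prodr_gt0 => i _; apply: pos.
have c0 : 0 <= c.
  have [m0 H] := ok.
  rewrite /c subr_ge0 exprn_ile1 // ?(P_ge0 ok) //.
  apply: (le_trans (P_le ok m0)).
  by have [a [b e']] := H 0%N m0; rewrite (le_trans _ e') // lerDl.
have c1 : c < 1 by rewrite /c ltrBlDr ltrDl exprn_gt0.
have cn : `|c| < 1 by rewrite ger0_norm.
have := @cvg_expr R c cn.
move=> /cvgrPdist_lt /(_ e e0) [N _ HN].
have := HN N (leqnn N); rewrite /= sub0r normrN ger0_norm ?exprn_ge0 // => hN.
exists (N * (2 * m))%N => n hn.
have -> : n = (N * (2 * m) + (n - N * (2 * m)))%N by rewrite subnKC.
apply: (le_lt_trans (T_anti _ _ ok)).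
exact: (le_lt_trans (T_geom _ ok)).
Qed.

Definition rr (R : realType) m (p q : nat -> R) (k : nat) : R := q (k %% m)%N / p (k %% m)%N.

Fixpoint ww (R : realType) m (p q : nat -> R) (k : nat) : R :=
  match k with 0 => 1 | k'.+1 => ww m p q k' * rr m p q k'.+1 end.

Definition HH (R : realType) m (p q : nat -> R) (k : nat) : R := \sum_(0 <= i < k) ww m p q i.

Definition Gf (R : realType) m (p q : nat -> R) (x : int) : R :=
  if `|x| < m%:Z then HH m p q (absz (x + m%:Z)) / HH m p q (2 * m) else 0.

Definition posq (R : realType) m (p q : nat -> R) : Prop :=
  (0 < m)%N /\ forall i, (i < m)%N -> 0 < p i /\ 0 < q i.

Lemma rr_gt0 (R : realType) m (p q : nat -> R) k : posq m p q -> 0 < rr m p q k.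
Proof.
move=> [m0 H]; have [a b] := H _ (ltn_pmod k m0).
by rewrite /rr divr_gt0.
Qed.

Lemma ww_gt0 (R : realType) m (p q : nat -> R) k : posq m p q -> 0 < ww m p q k.
Proof. by move=> ok; elim: k => [|k IH] //=; rewrite mulr_gt0 // rr_gt0. Qed.

Lemma HH_S (R : realType) m (p q : nat -> R) k : HH m p q k.+1 = HH m p q k + ww m p q k.
Proof. by rewrite /HH big_nat_recr. Qed.

Lemma HH_le (R : realType) m (p q : nat -> R) k d : posq m p q ->
  0 <= HH m p q k <= HH m p q (k + d).
Proof.
move=> ok; apply/andP; split.
  by apply: sumr_ge0 => i _; apply: ltW; apply: ww_gt0.
elim: d => [|d IH]; first by rewrite addn0.
by rewrite addnS HH_S (le_trans IH) // lerDl ltW // ww_gt0.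
Qed.

Lemma HH2m_gt0 (R : realType) m (p q : nat -> R) : posq m p q -> 0 < HH m p q (2 * m).
Proof.
move=> ok; have [m0 _] := ok.
have -> : (2 * m = 1 + (2 * m - 1))%N by lia.
have /andP[_ h] := HH_le 1 (2 * m - 1) ok.
apply: (lt_le_trans _ h); rewrite HH_S /HH big_geq // add0r.
exact: ww_gt0.
Qed.

Lemma Gf_bound (R : realType) m (p q : nat -> R) x : posq m p q ->
  0 <= Gf m p q x <= ind R m x.
Proof.
move=> ok; have H2 := HH2m_gt0 ok.
rewrite /Gf /ind; case: ifP => h /=; last by rewrite lexx.
have /andP[a b] := HH_le (absz (x + m%:Z)%R) (2 * m - absz (x + m%:Z)%R) ok.
have e : (absz (x + m%:Z)%R + (2 * m - absz (x + m%:Z)%R) = 2 * m)%N by lia.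
rewrite e in b.
apply/andP; split; first by rewrite divr_ge0 // (le_trans a b).
by rewrite ler_pdivrMr ?mul1r.
Qed.

Lemma Gfull (R : realType) m (p q : nat -> R) (y : int) k : posq m p q ->
  y = k%:Z - m%:Z -> (k <= 2 * m)%N ->
  Gf m p q y + (y == m%:Z)%:R = HH m p q k / HH m p q (2 * m).
Proof.
move=> ok -> hk; have [m0 _] := ok; have H2 := HH2m_gt0 ok.
rewrite /Gf; case: ifP => h.
  have /negbTE -> : (k%:Z - m%:Z != m%:Z) by apply/eqP; lia.
  by rewrite subrK /= addr0; congr (_ / _).
have [->|->] : k = 0%N \/ k = (2 * m)%N by lia.
  have /negbTE -> : (0%:Z - m%:Z != m%:Z) by apply/eqP; lia.
  by rewrite addr0 /HH big_geq ?mul0r.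
have /eqP -> : ((2 * m)%N%:Z - m%:Z == m%:Z) by apply/eqP; lia.
by rewrite eqxx add0r divff ?gt_eqF.
Qed.

Lemma idx_shift (m k : nat) : absz ((k%:Z - m%:Z) %% m%:Z)%Z = (k %% m)%N.
Proof.
have -> : k%:Z - m%:Z = (-1) * m%:Z + k%:Z by ring.
by rewrite modzMDl modz_nat.
Qed.

Lemma harm (R : realType) m (p q : nat -> R) x : posq m p q ->
  Lop m p q (fun y => Gf m p q y + (y == m%:Z)%:R) x = Gf m p q x.
Proof.
move=> ok; have [m0 H] := ok; have H2 := HH2m_gt0 ok.
rewrite /Lop; case: ifP => h; last by rewrite /Gf h.
have [j [xj j2]] : exists j, x = (j.+1)%:Z - m%:Z /\ (j.+2 <= 2 * m)%N.
  by exists (absz (x + m%:Z)%R).-1; split; lia.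
rewrite !big_ord_recr big_ord0 /= add0r /trans /step /=.
rewrite (@Gfull _ _ _ _ _ j) //; try lia.
rewrite (@Gfull _ _ _ _ _ j.+1) //; try lia.
rewrite (@Gfull _ _ _ _ _ j.+2) //; try lia.
rewrite /Gf h.
have -> : absz (x + m%:Z)%R = j.+1 by rewrite xj subrK.
rewrite xj idx_shift !HH_S /= /rr.
have [pa qa] := H _ (ltn_pmod j.+1 m0).
field; apply/andP; split; [exact: lt0r_neq0 | exact: lt0r_neq0].
Qed.

Lemma ww_shift (R : realType) m (p q : nat -> R) i :
  ww m p q (i + m) = ww m p q i * ww m p q m.
Proof.
elim: i => [|i IH]; first by rewrite add0n mul1r.
rewrite addSn /= IH /rr.
have -> : ((i + m).+1 %% m = i.+1 %% m)%N by rewrite -addSn modnDr.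
by rewrite mulrAC.
Qed.

Lemma ww_prod (R : realType) m (p q : nat -> R) k :
  ww m p q k = \prod_(1 <= i < k.+1) rr m p q i.
Proof.
elim: k => [|k IH]; first by rewrite big_geq.
by rewrite big_nat_recr //= IH.
Qed.

Lemma ww_m (R : realType) m (p q : nat -> R) : posq m p q ->
  ww m p q m = (\prod_(i < m) q i) / (\prod_(i < m) p i).
Proof.
move=> [m0 H].
rewrite ww_prod big_nat_recr // {2}/rr modnn.
have -> : \prod_(1 <= i < m) rr m p q i = \prod_(1 <= i < m) (q i / p i).
  rewrite big_nat_cond [RHS]big_nat_cond; apply: eq_bigr => i /andP[/andP[_ hi] _].
  by rewrite /rr modn_small.
have -> : (\prod_(i < m) q i) / (\prod_(i < m) p i) = \prod_(0 <= i < m) (q i / p i).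
  by rewrite big_mkord big_split /= prodfV.
by rewrite (big_ltn m0) /= mulrC.
Qed.

Lemma Gf0 (R : realType) m (p q : nat -> R) : posq m p q ->
  Gf m p q 0 = (\prod_(i < m) p i) / (\prod_(i < m) p i + \prod_(i < m) q i).
Proof.
move=> ok; have [m0 H] := ok.
have Pp : 0 < \prod_(i < m) p i by apply: prodr_gt0 => i _; have [] := H i (ltn_ord i).
have Qp : 0 < \prod_(i < m) q i by apply: prodr_gt0 => i _; have [] := H i (ltn_ord i).
have Hm : 0 < HH m p q m.
  have /andP[_ h] := HH_le 1 (m - 1) ok.
  have e : (1 + (m - 1) = m)%N by lia.
  rewrite e in h; apply: (lt_le_trans _ h).
  by rewrite HH_S /HH big_geq // add0r ww_gt0.
rewrite /Gf normr0 ltz_nat m0 add0r /=.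
have -> : HH m p q (2 * m) = HH m p q m * (1 + ww m p q m).
  rewrite /HH (big_cat_nat _ (n := m)) //=; last by lia.
  rewrite (big_addn 0 _ m).
  have -> : (2 * m - m = m)%N by lia.
  rewrite [X in _ + X = _](eq_bigr (fun i => ww m p q i * ww m p q m)); last first.
    by move=> i _; rewrite ww_shift.
  by rewrite -mulr_suml mulrDr mulr1.
rewrite ww_m //.
field.
rewrite !gt_eqF //= ?addr_gt0 //.
Qed.

Lemma a_step (R : realType) m (p q : nat -> R) n : posq m p q -> okpq m p q ->
  En m p q n (Gf m p q) = En m p q n.+1 (Gf m p q) + hit_up_at m p q n.+1.
Proof.
move=> pk ok.
rewrite (En_ext _ _ _ _ (g2 := Lop m p q (fun y => Gf m p q y + (y == m%:Z)%:R))); last first.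
  by move=> x; rewrite harm.
by rewrite -En_S En_add hit_En.
Qed.

Lemma series_eq (R : realType) m (p q : nat -> R) n : posq m p q -> okpq m p q ->
  series (hit_up_at m p q) n.+1 = Gf m p q 0 - En m p q n (Gf m p q).
Proof.
move=> pk ok; have [m0 _] := pk.
elim: n => [|n IH].
  rewrite /series /= big_nat1 hit_En !En_0 subrr.
  by have /negbTE -> : (0 != m%:Z :> int) by rewrite eq_sym eqz_nat -lt0n.
rewrite /series /= big_nat_recr //=.
move: IH; rewrite /series /= => ->.
rewrite (a_step n pk ok); ring.
Qed.

Unset Implicit Arguments.
Set Strict Implicit.

(* p^*_m = sum_n P_0(tau = n, S_tau = m), tau the hitting time of {-m, m}. *)
Theorem lemma3p2 (R : realType) (m : nat) (p q : nat -> R) :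
  (1 <= m)%N ->
  (forall i, (i < m)%N -> 0 <= p i) ->
  (forall i, (i < m)%N -> 0 <= q i) ->
  (forall i, (i < m)%N -> p i + q i <= 1) ->
  (forall i, (i < m)%N -> p i * q i != 0) ->
  let P := \prod_(i < m) p i in
  let Q := \prod_(i < m) q i in
  let rho := P / Q in
  (series (hit_up_at m p q) @ \oo --> (P / (P + Q) : R^o))
  /\ P / (P + Q) = rho / (1 + rho).
Proof.
move=> m0 hp hq hpq hne P Q rho.
have ok : okpq m p q by split => // i hi; split; [exact: hp|split; [exact: hq|exact: hpq]].
have pos : forall i, (i < m)%N -> 0 < p i /\ 0 < q i.
  move=> i hi; have := hne i hi; rewrite mulf_eq0 negb_or => /andP[a b].
  by split; rewrite lt_def ?a ?b ?hp ?hq.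
have pk : posq m p q by [].
have Pp : 0 < P by apply: prodr_gt0 => i _; have [] := pos i (ltn_ord i).
have Qp : 0 < Q by apply: prodr_gt0 => i _; have [] := pos i (ltn_ord i).
split; last first.
  rewrite /rho; field.
  by rewrite !gt_eqF //= ?addr_gt0 // ?divr_gt0 // ?addr_gt0 ?divr_gt0.
rewrite /P /Q -(Gf0 pk).
apply/cvgrPdist_lt => e e0.
have [N HN] := T_small ok (fun i hi => proj1 (pos i hi)) e0.
exists N.+1 => // n /= hn.
have -> : n = n.-1.+1 by lia.
rewrite series_eq // opprB addrC subrK.
have /andP[a0 a1] : 0 <= En m p q n.-1 (Gf m p q) <= Tn m p q n.-1.
  apply/andP; split.
    rewrite -(En_zero m p q n.-1); apply: En_le => // x.
    by case/andP: (Gf_bound x pk).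
  by apply: En_le => // x; case/andP: (Gf_bound x pk).
rewrite ger0_norm //; apply: (le_lt_trans a1); apply: HN; lia.
Qed.
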